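(* Let $\mathcal{H}_A,\mathcal{H}_B$ be finite-dimensional Hilbert spaces and $|\Psi\rangle\in\mathcal{H}_A\otimes\mathcal{H}_B$ a unit vector. For a unit vector $|\phi\rangle\in\mathcal{H}_A$ with $(\langle\phi|\otimes\mathbf{1})|\Psi\rangle\neq0$, its relative state is the normalization of $(\langle\phi|\otimes\mathbf{1})|\Psi\rangle\in\mathcal{H}_B$; for a unit vector $|\chi\rangle\in\mathcal{H}_B$ with $(\mathbf{1}\otimes\langle\chi|)|\Psi\rangle\neq0$, its relative state is the normalization of $(\mathbf{1}\otimes\langle\chi|)|\Psi\rangle\in\mathcal{H}_A$. Let $|\phi^{(1)}\rangle\in\mathcal{H}_A$ be a unit vector with $\langle\Psi|(|\phi^{(1)}\rangle\langle\phi^{(1)}|\otimes\mathbf{1})|\Psi\rangle>0$. Then the sequence defined by letting $|\chi^{(i)}\rangle$ be the relative state of $|\phi^{(i)}\rangle$ and $|\phi^{(i+1)}\rangle$ the relative state of $|\chi^{(i)}\rangle$ is well defined for all $i\geq1$, and for every $N\geq1$, $\langle\phi^{(1)}|\phi^{(N)}\rangle\neq0$. *)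

(* Defs.v *)
From HB Require Import structures.
From mathcomp Require Import all_boot all_order all_algebra.
From mathcomp Require Import reals.
From mathcomp Require Export complex.
Set Implicit Arguments. Unset Strict Implicit. Unset Printing Implicit Defensive.
Import Order.TTheory GRing.Theory Num.Theory.
Local Open Scope ring_scope.

Section RelState.
Variable C : numClosedFieldType.
Variables m n : nat.

Definition dotv k (u v : 'cV[C]_k) : C := \sum_(i < k) (u i 0)^* * v i 0.

Definition unit_vec k (v : 'cV[C]_k) : Prop := dotv v v = 1.

(* normalization v / ||v|| (equals 0 when v = 0) *)
Definition normalize k (v : 'cV[C]_k) : 'cV[C]_k := (sqrtC (dotv v v))^-1 *: v.

(* A vector |Psi> of H_A (x) H_B = C^m (x) C^n is represented by its
   coefficient matrix Psi i j = coefficient of e_i (x) f_j. *)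
Definition unit_state (Psi : 'M[C]_(m, n)) : Prop :=
  \sum_(i < m) \sum_(j < n) (Psi i j)^* * Psi i j = 1.

Definition contrA (Psi : 'M[C]_(m, n)) (phi : 'cV[C]_m) : 'cV[C]_n :=
  \col_(j < n) \sum_(i < m) (phi i 0)^* * Psi i j.

Definition contrB (Psi : 'M[C]_(m, n)) (chi : 'cV[C]_n) : 'cV[C]_m :=
  \col_(i < m) \sum_(j < n) (chi j 0)^* * Psi i j.

(* relative states (meaningful when the contraction is nonzero) *)
Definition relB Psi phi : 'cV[C]_n := normalize (contrA Psi phi).
Definition relA Psi chi : 'cV[C]_m := normalize (contrB Psi chi).

Definition expect_proj (Psi : 'M[C]_(m, n)) (phi : 'cV[C]_m) : C :=
  \sum_(j < n) \sum_(i < m) \sum_(i' < m)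
     (Psi i j)^* * (phi i 0 * (phi i' 0)^*) * Psi i' j.

(* phi_seq Psi phi1 k = |phi^(k+1)>,  chi_seq Psi phi1 k = |chi^(k+1)> *)
Fixpoint phi_seq (Psi : 'M[C]_(m, n)) (phi1 : 'cV[C]_m) (k : nat) : 'cV[C]_m :=
  match k with
  | 0 => phi1
  | k'.+1 => relA Psi (relB Psi (phi_seq Psi phi1 k'))
  end.

Definition chi_seq Psi phi1 k : 'cV[C]_n := relB Psi (phi_seq Psi phi1 k).

End RelState.

(* Main.v *)
Require Import Defs.
From HB Require Import structures.
From mathcomp Require Import all_boot all_order all_algebra.
From mathcomp Require Import reals complex ring.
Import Order.TTheory GRing.Theory Num.Theory.
Set Implicit Arguments. Unset Strict Implicit.
Local Open Scope ring_scope.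

Section Gen.
Variable C : numClosedFieldType.
Variables m n : nat.
Variable Psi : 'M[C]_(m, n).

Lemma conj_ge0 (x : C) : 0 <= x -> x^* = x.
Proof. by move=> h; apply: conj_Creal; apply: ger0_real. Qed.

Lemma dotvZl k a (u v : 'cV[C]_k) : dotv (a *: u) v = a^* * dotv u v.
Proof. rewrite /dotv mulr_sumr; apply: eq_bigr => i _; by rewrite mxE rmorphM mulrA. Qed.

Lemma dotvZr k a (u v : 'cV[C]_k) : dotv u (a *: v) = a * dotv u v.
Proof. rewrite /dotv mulr_sumr; apply: eq_bigr => i _; rewrite mxE; ring. Qed.

Lemma dotvC k (u v : 'cV[C]_k) : dotv u v = (dotv v u)^*.
Proof. rewrite /dotv rmorph_sum; apply: eq_bigr => i _; by rewrite rmorphM /= conjCK mulrC. Qed.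

Lemma dotv0l k (v : 'cV[C]_k) : dotv 0 v = 0.
Proof. rewrite /dotv big1 // => i _; by rewrite mxE conjC0 mul0r. Qed.

Lemma dotv_ge0 k (u : 'cV[C]_k) : 0 <= dotv u u.
Proof. apply: sumr_ge0 => i _; by rewrite mulrC mul_conjC_ge0. Qed.

Lemma dotv_gt0 k (u : 'cV[C]_k) : u != 0 -> 0 < dotv u u.
Proof.
move=> nz; rewrite lt_def dotv_ge0 andbT; apply/negP => /eqP h.
move: nz; rewrite /dotv in h; move/eqP: h; rewrite psumr_eq0; last first.
  by move=> i _; rewrite mulrC mul_conjC_ge0.
move=> /allP h; apply/negP; rewrite negbK; apply/eqP/matrixP => i j.
rewrite (ord1 j) mxE; have := h i (mem_index_enum _); rewrite mulrC mul_conjC_eq0.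
by move/eqP.
Qed.

Lemma adj (chi : 'cV[C]_n) (phi : 'cV[C]_m) :
  dotv (contrB Psi chi) phi = dotv (contrA Psi phi) chi.
Proof.
rewrite /dotv.
under eq_bigr do rewrite mxE rmorph_sum big_distrl /=.
under [RHS]eq_bigr do rewrite mxE rmorph_sum big_distrl /=.
rewrite exchange_big; apply: eq_bigr => j _; apply: eq_bigr => i _.
rewrite !rmorphM /= !conjCK; ring.
Qed.

Lemma expectE phi : expect_proj Psi phi = dotv (contrA Psi phi) (contrA Psi phi).
Proof.
rewrite /expect_proj /dotv; apply: eq_bigr => j _.
rewrite !mxE rmorph_sum big_distrl /=; apply: eq_bigr => i _.
rewrite big_distrr /=; apply: eq_bigr => i' _.
rewrite rmorphM /= conjCK; ring.
Qed.

Definition nc k (v : 'cV[C]_k) : C := (sqrtC (dotv v v))^-1.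
Lemma nc_ge0 k (v : 'cV[C]_k) : 0 <= nc v.
Proof. by rewrite /nc invr_ge0 sqrtC_ge0 dotv_ge0. Qed.
Lemma nc_gt0 k (v : 'cV[C]_k) : v != 0 -> 0 < nc v.
Proof. by move=> h; rewrite /nc invr_gt0 sqrtC_gt0 dotv_gt0. Qed.

Variable phi1 : 'cV[C]_m.
Let ph k := phi_seq Psi phi1 k.
Let a k := contrA Psi (ph k).
Let b k := contrB Psi (chi_seq Psi phi1 k).
Lemma chiE k : chi_seq Psi phi1 k = nc (a k) *: a k. Proof. by []. Qed.
Lemma phSE k : ph k.+1 = nc (b k) *: b k. Proof. by []. Qed.

Lemma form1 k j : dotv (ph k) (ph j.+1) = nc (b j) * nc (a j) * dotv (a j) (a k).
Proof.
rewrite phSE dotvZr dotvC /b adj chiE dotvZr rmorphM /= conj_ge0 ?nc_ge0 //.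
by rewrite -dotvC mulrA.
Qed.

Lemma form2 k j : dotv (ph k.+1) (ph j) = nc (b k) * nc (a k) * dotv (a j) (a k).
Proof.
rewrite phSE dotvZl conj_ge0 ?nc_ge0 // /b adj chiE dotvZr mulrA //.
Qed.

Hypothesis a0 : a 0 != 0.

Lemma nz k : a k != 0 /\ b k != 0.
Proof.
have step : forall k, a k != 0 -> b k != 0.
  move=> k0 h; apply/negP => /eqP hb.
  have : dotv (b k0) (ph k0) = 0 by rewrite hb dotv0l.
  rewrite /b adj chiE dotvZr => /eqP; apply/negP; rewrite mulf_eq0 negb_or.
  by rewrite gt_eqF ?nc_gt0 // gt_eqF ?dotv_gt0.
elim: k => [|k [ha hb]]; first by split => //; apply: step.
have hak : a k.+1 != 0.
  apply/negP => /eqP h.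
  have : dotv (a k.+1) (chi_seq Psi phi1 k) = 0 by rewrite h dotv0l.
  rewrite /a -adj phSE dotvZr => /eqP; apply/negP; rewrite mulf_eq0 negb_or.
  by rewrite gt_eqF ?nc_gt0 // gt_eqF ?dotv_gt0.
by split => //; apply: step.
Qed.

Hypothesis u1 : unit_vec phi1.

Lemma posP j : forall k, 0 < dotv (ph k) (ph (k + j)).
Proof.
elim/ltn_ind: j => j IH k.
case: j IH => [|[|j]] IH.
- rewrite addn0; case: k => [|k]; first by rewrite /ph /= u1 ltr01.
  apply: dotv_gt0; rewrite phSE; apply/negP => /eqP h.
  have := nz k => -[_ hb]; move: h => /eqP; apply/negP; rewrite scaler_eq0 negb_or.
  by rewrite gt_eqF ?nc_gt0 // hb.
- have [ha hb] := nz k.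
  rewrite addn1 form1 mulr_gt0 ?dotv_gt0 // mulr_gt0 ?nc_gt0 //.
- have [ha hb] := nz k.
  have [ha' hb'] := nz (k + j).+1.
  have h := IH j (leqW (ltnSn j)) k.+1.
  rewrite form2 addSn -addnS in h.
  have hG : 0 < dotv (a (k + j).+1) (a k).
    rewrite addnS in h.
    by rewrite -(pmulr_rgt0 _ (mulr_gt0 (nc_gt0 hb) (nc_gt0 ha))).
  by rewrite !addnS form1 mulr_gt0 // mulr_gt0 ?nc_gt0.
Qed.
End Gen.
Local Open Scope complex_scope.

Theorem mainTheorem9 (R : realType) (m n : nat)
    (Psi : 'M[R[i]]_(m, n)) (phi1 : 'cV[R[i]]_m) :
  unit_state Psi -> unit_vec phi1 -> 0 < expect_proj Psi phi1 ->
  (forall k : nat,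
      contrA Psi (phi_seq Psi phi1 k) != 0 /\
      contrB Psi (chi_seq Psi phi1 k) != 0) /\
  (forall k : nat, dotv phi1 (phi_seq Psi phi1 k) != 0).
Proof.
move=> _ u1 hE.
have a0 : contrA Psi (phi_seq Psi phi1 0) != 0.
  apply/negP => /eqP h; move: hE; rewrite expectE /= h dotv0l.
  by rewrite ltxx.
split; first by move=> k; apply: (nz a0).
move=> k; have := posP a0 u1 k 0; rewrite add0n /= => h.
by rewrite gt_eqF.
Qed.
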